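(* Let $(S,d)$ be a metric space and $\bullet\in\{\mathrm{FM},\mathrm{BL}\}$. If $f\in B^S_\bullet$ satisfies $|f|=\mathbf{1}$, then $f\in\operatorname{ext}(B^S_\bullet)$. In particular, if $\bullet=\mathrm{BL}$, then $f=\pm\mathbf{1}$.
   Context: $\mathrm{BL}(S)$ is the space of bounded real-valued Lipschitz functions on $S$, $|f|_L=\sup_{x\neq y}|f(x)-f(y)|/d(x,y)$, $\|f\|_{\mathrm{BL}}=\|f\|_\infty+|f|_L$, $\|f\|_{\mathrm{FM}}=\max(\|f\|_\infty,|f|_L)$, $B^S_\bullet=\{f\in\mathrm{BL}(S):\|f\|_\bullet\le1\}$, $\operatorname{ext}$ denotes the set of extreme points, and $\mathbf{1}$ is the constant function $1$. *)

(* Defs.v *)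
From HB Require Import structures.
From mathcomp Require Import all_boot all_order all_algebra.
From mathcomp Require Import boolp classical_sets reals.
Set Implicit Arguments. Unset Strict Implicit. Unset Printing Implicit Defensive.
Import Order.TTheory GRing.Theory Num.Theory.
Local Open Scope ring_scope.
Local Open Scope classical_set_scope.

Definition is_metric (R : realType) (S : Type) (d : S -> S -> R) : Prop :=
  [/\ (forall x y, 0 <= d x y),
      (forall x y, d x y = 0 <-> x = y),
      (forall x y, d x y = d y x) &
      (forall x y z, d x z <= d x y + d y z)].

Definition is_BL (R : realType) (S : Type) (d : S -> S -> R) (f : S -> R) : Prop :=
  (exists M : R, forall x, `|f x| <= M) /\
  (exists L : R, forall x y, `|f x - f y| <= L * d x y).

Definition sup_norm (R : realType) (S : Type) (f : S -> R) : R :=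
  sup [set `|f x| | x in [set: S]].

Definition lip_const (R : realType) (S : Type) (d : S -> S -> R) (f : S -> R) : R :=
  sup [set `|f xy.1 - f xy.2| / d xy.1 xy.2 | xy in [set xy : S * S | xy.1 <> xy.2]].

Inductive normkind := FM | BL.

Definition bnorm (R : realType) (S : Type) (d : S -> S -> R) (k : normkind)
    (f : S -> R) : R :=
  match k with
  | FM => Num.max (sup_norm f) (lip_const d f)
  | BL => sup_norm f + lip_const d f
  end.

Definition unit_ball (R : realType) (S : Type) (d : S -> S -> R) (k : normkind)
    : set (S -> R) :=
  [set f | is_BL d f /\ bnorm d k f <= 1].

Definition is_extreme (R : realType) (S : Type) (C : set (S -> R)) (f : S -> R)
    : Prop :=
  C f /\
  forall g h : S -> R, C g -> C h -> forall t : R, 0 < t < 1 ->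
    f = (fun x => t * g x + (1 - t) * h x) -> g = h.

(* Main.v *)
Require Import Defs.
From HB Require Import structures.
From mathcomp Require Import all_boot all_order all_algebra.
From mathcomp Require Import boolp classical_sets reals.
From mathcomp Require Import lra.
Import Order.TTheory GRing.Theory Num.Theory.
Local Open Scope ring_scope.
Local Open Scope classical_set_scope.
Set Implicit Arguments. Unset Strict Implicit.

Lemma L1 (R : realType) (S : Type) (d : S -> S -> R) g :
  is_BL d g -> forall x, `|g x| <= sup_norm g.
Proof.
move=> [[M hM] _] x; apply: ub_le_sup; last by exists x.
by exists M => _ [y _ <-].
Qed.

Lemma L2 (R : realType) (S : Type) (d : S -> S -> R) g :
  is_metric d -> is_BL d g -> forall x y, x <> y ->
  `|g x - g y| / d x y <= lip_const d g.
Proof.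
move=> [d0 dE _ _] [_ [L hL]] x y xy; apply: ub_le_sup; last by exists (x, y).
exists L => _ [[a b] /= ab <-] /=.
have dp : 0 < d a b by rewrite lt_neqAle d0 andbT; apply/eqP => /esym /dE.
by rewrite ler_pdivrMr.
Qed.

Lemma L3 (R : realType) (S : Type) (d : S -> S -> R) g :
  is_metric d -> is_BL d g -> 0 <= lip_const d g.
Proof.
move=> hd hg; case: (pselect (exists xy : S * S, xy.1 <> xy.2)) => [[[x y] /= xy]|].
  apply: (le_trans _ (L2 hd hg xy)); apply: divr_ge0 => //; case: hd => //.
move=> /forallNP H; rewrite /lip_const.
have -> : [set `|g xy.1 - g xy.2| / d xy.1 xy.2 | xy in [set xy : S * S | xy.1 <> xy.2]] = set0.
  apply/seteqP; split => // _ [xy /= xy12 _]; exfalso; exact: H xy xy12.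
by rewrite sup0.
Qed.

Lemma L4 (R : realType) (S : Type) (d : S -> S -> R) k g :
  is_metric d -> unit_ball d k g -> forall x, `|g x| <= 1.
Proof.
move=> hd [hg hn] x; apply: le_trans (L1 hg x) _.
have := L3 hd hg; case: k hn => /= hn h0.
  by apply: le_trans hn; rewrite le_max lexx.
lra.
Qed.

Theorem lemma3p1 (R : realType) (S : Type) (d : S -> S -> R)
    (hd : is_metric d) (k : normkind) (f : S -> R) :
  unit_ball d k f -> (forall x, `|f x| = 1) ->
  is_extreme (unit_ball d k) f /\
  (k = BL -> f = (fun _ => 1) \/ f = (fun _ => -1)).
Proof.
move=> hf f1; split.
  split => // g h hg hh t /andP [t0 t1] E; apply/funext => x.
  have gx := L4 hd hg x; have hx := L4 hd hh x.
  have fx := f1 x; have := congr1 (fun F => F x) E => /= Ex.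
  move: gx hx fx; rewrite !ler_norml.
  move=> /andP [g1 g2] /andP [h1 h2].
  have [fp|fn] := lerP 0 (f x).
    rewrite ger0_norm // => fx1; rewrite fx1 in Ex.
    have eg : g x = 1 by nra.
    have eh : h x = 1 by nra.
    by rewrite eg eh.
  rewrite ltr0_norm // => fx1.
  have Ex' : f x = -1 by lra.
  rewrite Ex' in Ex.
  have eg : g x = -1 by nra.
  have eh : h x = -1 by nra.
  by rewrite eg eh.
move=> kB; subst k.
have [->|] := pselect (f = (fun _ => 1)); first by left.
move=> nf1.
have [x fx] : exists x, f x <> 1.
  apply/existsNP => H; apply: nf1; apply/funext => x; exact: H.
have fxm : f x = -1.
  by have := f1 x; case: (lerP 0 (f x)) => h; [rewrite ger0_norm|rewrite ltr0_norm]; lra.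
have [->|] := pselect (f = (fun _ => -1)); first by right.
move=> nfm; exfalso.
have [y fy] : exists y, f y <> -1.
  apply/existsNP => H; apply: nfm; apply/funext => z; exact: H.
have fyp : f y = 1.
  by have := f1 y; case: (lerP 0 (f y)) => h; [rewrite ger0_norm|rewrite ltr0_norm]; lra.
have yx : y <> x by move=> e; rewrite e fxm in fyp; clear nf1 nfm; lra.
case: hf => hg /= hn.
have s1 := L1 hg x; rewrite f1 in s1.
have l1 := L2 hd hg yx; rewrite fyp fxm in l1.
have dp : 0 < d y x.
  case: hd => d0 dE _ _; rewrite lt_neqAle d0 andbT; apply/eqP => /esym /dE //.
have : 0 < `|1 - -1| / d y x :> R.
  by apply: divr_gt0 => //; rewrite opprK normr_gt0 paddr_eq0 ?ler01 ?oner_eq0.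
move: hn s1 l1; clear; move=> hn s1 l1 h; lra.
Qed.
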